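(* Let $\Sigma$ be an Ehrhart fan. Then there is a unique function $\chi_\Sigma:\underline{\mathrm{PL}}(\Sigma)\to\mathbb{Z}$ satisfying condition (2) of the definition of Ehrhart fans (with $\chi_{\Sigma^\rho}$ the, inductively unique, such functions for the star fans). Moreover, the function $\widehat\chi_\Sigma:\mathbb{Z}^{\Sigma(1)}=\mathrm{PL}(\Sigma)\to\mathbb{Z}$, $f\mapsto\chi_\Sigma([f])$, agrees with a polynomial in $\mathbb{Q}[x_\rho\mid\rho\in\Sigma(1)]$ (evaluated at $x_\rho=f(u_\rho)$) of degree $\dim\Sigma$.
   Context: $N$ is a free abelian group of rank $n$, $N_\mathbb{R}=N\otimes\mathbb{R}$, $M=\mathrm{Hom}(N,\mathbb{Z})$, viewed as integral linear functions on $N_\mathbb{R}$. A fan $\Sigma$ (finite collection of rational polyhedral cones closed under faces, pairwise intersecting in common faces) is unimodular if it contains the origin and for each cone the primitive ray generators $u_\rho\in N$ of its rays extend to a $\mathbb{Z}$-basis of $N$. $\mathrm{PL}(\Sigma)$ is the group of functions $f:|\Sigma|\to\mathbb{R}$ with $f|_\sigma=m|_\sigma$ for some $m\in M$ on each cone $\sigma$; $\mathrm{L}(\Sigma)$ is the subgroup of restrictions of elements of $M$; $\underline{\mathrm{PL}}(\Sigma)=\mathrm{PL}(\Sigma)/\mathrm{L}(\Sigma)$. For unimodular $\Sigma$, $\mathrm{PL}(\Sigma)\cong\mathbb{Z}^{\Sigma(1)}$ via $f\mapsto(f(u_\rho))_\rho$, and the Courant function $\delta_\rho\in\mathrm{PL}(\Sigma)$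 takes value $1$ at $u_\rho$ and $0$ at all other ray generators. For a cone $\sigma$ of a unimodular fan $\Sigma$, the star fan $\Sigma^\sigma$ is the fan in $N^\sigma_\mathbb{R}$, where $N^\sigma=N/\mathrm{Span}_\mathbb{Z}(\sigma\cap N)$, consisting of the images under the quotient map of all cones of $\Sigma$ that are faces of cones containing $\sigma$; it is unimodular with respect to $N^\sigma$. For $f\in\mathrm{PL}(\Sigma)$, $[f]^\sigma\in\underline{\mathrm{PL}}(\Sigma^\sigma)$ is the class of the function induced on $\Sigma^\sigma$ by $f-m$, where $m\in M$ agrees with $f$ on $\sigma$ (independent of the choice). Ehrhart fans are defined recursively on dimension: a unimodular fan $\Sigma$ is Ehrhart if (1) $\Sigma^\rho$ is Ehrhart for every $\rho\in\Sigma(1)$, and (2) there is a function $\chi_\Sigma:\underline{\mathrm{PL}}(\Sigma)\to\mathbb{Z}$ with $\chi_\Sigma(0)=1$ and $\chi_\Sigma([f])=\chi_\Sigma([f-\delta_\rho])+\chi_{\Sigma^\rho}([f]^\rho)$ for all $f\in\mathrm{PL}(\Sigma)$ and $\rho\in\Sigma(1)$, where $\chi_{\Sigma^\rho}$ is the corresponding function for $\Sigma^\rho$. (A zero-dimensional fan is Ehrhart with $\chi=1$.) *)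

(* Defs.v *)
From HB Require Import structures.
From mathcomp Require Import all_boot all_order all_algebra.
From mathcomp Require Import Rstruct.
From mathcomp Require Import mpoly.
Set Implicit Arguments. Unset Strict Implicit. Unset Printing Implicit Defensive.
Import Order.TTheory GRing.Theory Num.Theory.
Local Open Scope ring_scope.

Section Fans.
(* A unimodular fan in N = Z^n is encoded by its finite set of rays V,
   the primitive ray generators u : V -> N, and its cones, each cone being
   given by the set of its rays (cones of unimodular fans are simplicial,
   generated by their rays). *)
Variables (n : nat) (V : finType) (u : V -> 'rV[int]_n) (C : {set {set V}}).

(* the pairing M x N -> Z, with M = Hom(N,Z) identified with Z^n *)
Definition pairing (m x : 'rV[int]_n) : int := \sum_(i < n) m 0 i * x 0 i.

Definition coneR (S : {set V}) (x : 'rV[Rdefinitions.R]_n) : Prop :=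
  exists lam : V -> Rdefinitions.R, (forall v, 0 <= lam v) /\
    x = \sum_(v in S) lam v *: map_mx (fun z : int => z%:~R) (u v).

Definition unimodular_fan : Prop :=
  [/\ set0 \in C,
      (* V is exactly the set of rays Sigma(1) *)
      forall v, [set v] \in C,
      (* closed under faces (faces of a simplicial cone = subsets of rays) *)
      forall S T : {set V}, S \in C -> T \subset S -> T \in C,
      (* pairwise intersecting in common faces *)
      forall S T : {set V}, S \in C -> T \in C ->
        forall x, coneR S x -> coneR T x -> coneR (S :&: T) x &
      (* unimodularity: generators of each cone extend to a Z-basis of N *)
      forall S : {set V}, S \in C -> exists B : 'M[int]_n, B \in unitmx /\
        exists e : V -> 'I_n, {in S &, injective e} /\
          {in S, forall v, row (e v) B = u v}].

(* Star fan Sigma^s of the cone s: its rays are (the images of) the rays in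
   link s; PL(Sigma^s) = Z^(link s), represented by functions V -> int whose
   values outside link s are irrelevant; L(Sigma^s) = restrictions of
   M^s = Hom(N^s, Z) = { m in M | m vanishes on s }. *)
Definition link (s : {set V}) : {set V} :=
  [set v | (v \notin s) && ((v |: s) \in C)].

Definition linear_on_star (s : {set V}) (g : V -> int) : Prop :=
  exists m : 'rV[int]_n, (forall v, v \in s -> pairing m (u v) = 0) /\
    (forall v, v \in link s -> g v = pairing m (u v)).

(* f and g define the same class in PL(Sigma^s)/L(Sigma^s) *)
Definition pl_equiv (s : {set V}) (f g : V -> int) : Prop :=
  linear_on_star s (fun v => f v - g v).

Definition well_defined (s : {set V}) (chi : (V -> int) -> int) : Prop :=
  forall f g, pl_equiv s f g -> chi f = chi g.

Definition courant (r : V) : V -> int := fun v => (v == r)%:Z.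

(* is_chiF d s chi : chi is an Ehrhart function chi_{Sigma^s} (d = fuel,
   always equal to #|~: s|, which decreases when passing to a star). *)
Fixpoint is_chiF (d : nat) (s : {set V}) (chi : (V -> int) -> int) : Prop :=
  [/\ well_defined s chi, chi (fun _ => 0) = 1 &
   match d with
   | 0 => link s = set0
   | d'.+1 =>
     forall r, r \in link s ->
       (exists psi, is_chiF d' (r |: s) psi) /\
       (* (2) the recursion, with psi the function of the star fan and
          f - m (m in M^s agreeing with f on r) representing [f]^r *)
       (forall psi, is_chiF d' (r |: s) psi ->
        forall (f : V -> int) (m : 'rV[int]_n),
          (forall v, v \in s -> pairing m (u v) = 0) ->
          pairing m (u r) = f r ->
          chi f = chi (fun v => f v - courant r v)
                  + psi (fun v => f v - pairing m (u v)))
   end].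

Definition is_chi (s : {set V}) (chi : (V -> int) -> int) : Prop :=
  is_chiF #|~: s| s chi.

(* Sigma (= Sigma^{0}) is Ehrhart *)
Definition ehrhart : Prop := exists chi, is_chi set0 chi.

(* dimension of the fan = max dimension of a cone = max number of rays *)
Definition fan_dim : nat := \max_(S in C) #|S|.

End Fans.

(* evaluation of a polynomial in Q[x_rho | rho in V] at x_rho = f rho;
   variables are indexed by 'I_#|V| via enum_val *)
Definition eval_at (V : finType) (p : {mpoly rat[#|V|]}) (f : V -> int) : rat :=
  p.@[fun i : 'I_#|V| => (f (enum_val i))%:~R].

(* Main.v *)
Require Import Defs.
From HB Require Import structures.
From mathcomp Require Import all_boot all_order all_algebra.
From mathcomp Require Import Rstruct.
From mathcomp Require Import mpoly.
From mathcomp Require Import zify ring lra.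
From Stdlib Require Import FunctionalExtensionality.
Import Order.TTheory GRing.Theory Num.Theory.
Local Open Scope ring_scope.
Set Implicit Arguments. Unset Strict Implicit. Unset Printing Implicit Defensive.
Section Diff.
Variables (V : finType) (R : zmodType).

Definition dif (w : V -> int) (F : (V -> int) -> R) : (V -> int) -> R :=
  fun f => F f - F (fun v => f v - w v).

Fixpoint Q (k : nat) (F : (V -> int) -> R) : Prop :=
  match k with
  | 0%N => forall f, F f = 0
  | k'.+1 => forall w, Q k' (dif w F)
  end.

Lemma QSE k F : Q k.+1 F = forall w, Q k (dif w F). Proof. by []. Qed.
Lemma Q0E F : Q 0 F = forall f, F f = 0. Proof. by []. Qed.
Lemma QSi k F : Q k.+1 F -> forall w, Q k (dif w F). Proof. by []. Qed.
Lemma Q0i F : Q 0 F -> forall f, F f = 0. Proof. by []. Qed.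

Lemma Q_ext k F G : Q k F -> (forall f, F f = G f) -> Q k G.
Proof. by move=> hF h; rewrite -(functional_extensionality F G h). Qed.

Lemma Q0 k : Q k (fun _ => 0).
Proof.
elim: k => [//|k IH]; rewrite QSE => w; apply: (Q_ext IH) => f; by rewrite /dif subrr.
Qed.

Lemma QD k F G : Q k F -> Q k G -> Q k (fun f => F f + G f).
Proof.
elim: k F G => [|k IH] F G hF hG.
  by rewrite Q0E => f; rewrite (Q0i hF) (Q0i hG) addr0.
rewrite QSE => w; apply: (Q_ext (IH _ _ (QSi hF w) (QSi hG w))) => f; rewrite /dif.
by rewrite opprD !addrA; congr (_ + _); rewrite -!addrA; congr (_ + _); rewrite addrC.
Qed.

Lemma QN k F : Q k F -> Q k (fun f => - F f).
Proof.
elim: k F => [|k IH] F hF; first by rewrite Q0E => f; rewrite (Q0i hF) oppr0.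
rewrite QSE => w; apply: (Q_ext (IH _ (QSi hF w))) => f; rewrite /dif; by rewrite opprB opprK addrC.
Qed.

Lemma Qsh k F a : Q k F -> Q k (fun f => F (fun v => f v - a v)).
Proof.
elim: k F a => [|k IH] F a hF; first by rewrite Q0E => f; rewrite (Q0i hF).
rewrite QSE => w; apply: (Q_ext (IH _ a (QSi hF w))) => f; rewrite /dif; congr (_ - F _).
apply: functional_extensionality => v; by rewrite -!addrA [- w v + _]addrC.
Qed.

Lemma Qcomp k F (L : (V -> int) -> (V -> int)) :
  (forall f w, L (fun v => f v - w v) = (fun v => L f v - L w v)) ->
  Q k F -> Q k (fun f => F (L f)).
Proof.
move=> hL; elim: k F => [|k IH] F hF; first by rewrite Q0E => f; rewrite (Q0i hF).
rewrite QSE => w; apply: (Q_ext (IH _ (QSi hF (L w)))) => f; by rewrite /dif hL.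
Qed.

Lemma Qdif k F w : Q k F -> Q k (dif w F).
Proof.
move=> h; apply: (Q_ext (QD h (QN (Qsh w h)))) => f; by [].
Qed.

Lemma Qmono k F : Q k F -> Q k.+1 F.
Proof.
elim: k F => [|k IH] F hF; rewrite QSE => w.
  by rewrite Q0E => f; rewrite /dif !(Q0i hF) subrr.
by apply: IH; apply: QSi.
Qed.

Lemma Qle k k' F : (k <= k')%N -> Q k F -> Q k' F.
Proof.
move=> /subnKC <-; elim: (k' - k)%N => [|j IH] h; first by rewrite addn0.
by rewrite addnS; apply: Qmono; apply: IH.
Qed.

Lemma Qiter k F w : Q k F -> forall f, iter k (dif w) F f = 0.
Proof.
elim: k F => [|k IH] F hF f; first exact: Q0i hF f.
rewrite iterSr; exact: IH (QSi hF w) f.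
Qed.

Lemma lattice_ind (P : (V -> int) -> Prop) (l : seq V) :
  (forall f a, a \in l -> P f -> P (fun v => f v + courant a v) /\
                                   P (fun v => f v - courant a v)) ->
  forall f, P (fun v => if v \in l then 0 else f v) -> P f.
Proof.
elim: l => [|a l IH] hP f.
  by have -> : (fun v => if v \in [::] then 0 else f v) = f by apply: functional_extensionality.
move=> h0.
have hP' : forall f a, a \in l -> P f -> P (fun v => f v + courant a v) /\
                                   P (fun v => f v - courant a v).
  by move=> g b bl; apply: hP; rewrite inE bl orbT.
set g := fun v => f v - f a * courant a v.
have Pg : P g.
  apply: IH => //; move: h0; congr P; apply: functional_extensionality => v.
  rewrite /g inE /courant; case: (eqVneq v a) => [->|nva] /=.
    by case: (a \in l) => //; rewrite mulr1 subrr.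
  by case: (v \in l) => //; rewrite mulr0 subr0.
have hk : forall k : nat, P (fun v => g v + k%:Z * courant a v) /\
                         P (fun v => g v - k%:Z * courant a v).
  elim=> [|k [IH1 IH2]].
    by split; move: Pg; congr P; apply: functional_extensionality => v; rewrite mul0r ?addr0 ?subr0.
  have aa : a \in a :: l by rewrite inE eqxx.
  split.
    have := (hP _ _ aa IH1).1; congr P; apply: functional_extensionality => v.
    by rewrite intS; ring.
  have := (hP _ _ aa IH2).2; congr P; apply: functional_extensionality => v.
  by rewrite intS; ring.
have : P (fun v => g v + f a * courant a v).
  case: (f a) => k; first exact: (hk k).1.
  have := (hk k.+1).2; congr P; apply: functional_extensionality => v.
  by rewrite NegzE mulNr.
congr P; apply: functional_extensionality => v; by rewrite /g subrK.
Qed.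

End Diff.
Section Diff2.
Variables (V : finType) (R : zmodType).
Implicit Types F : (V -> int) -> R.

Lemma Qcoord k F : (forall a, Q k (dif (courant a) F)) -> Q k.+1 F.
Proof.
move=> h; rewrite QSE => w.
apply: (@lattice_ind V (fun w => Q k (dif w F)) (enum V)); last first.
  apply: (Q_ext (@Q0 V R k)) => f; rewrite /dif.
  have -> : (fun v => f v - (if v \in enum V then 0 else w v)) = f.
    by apply: functional_extensionality => v; rewrite mem_enum subr0.
  by rewrite subrr.
move=> g a _ hg; split.
  apply: (Q_ext (QD hg (Qsh g (h a)))) => f; rewrite /dif.
  have -> : (fun v => (f v - g v) - courant a v) = (fun v => f v - (g v + courant a v)).
    by apply: functional_extensionality => v; rewrite opprD addrA.
  by rewrite addrA subrK.
apply: (Q_ext (QD hg (QN (Qsh (fun v => g v - courant a v) (h a))))) => f; rewrite /dif.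
have -> : (fun v => (f v - (g v - courant a v)) - courant a v) = (fun v => f v - g v).
  by apply: functional_extensionality => v; ring.
by rewrite opprB addrA subrK.
Qed.

Lemma Qcoord_iff k F : (forall l : seq V, Q k F) -> True. Proof. by []. Qed.

End Diff2.

Section DiffRing.
Variables (V : finType) (R : comRingType).
Implicit Types F G : (V -> int) -> R.

Lemma QZ k (c : R) F : Q k F -> Q k (fun f => c * F f).
Proof.
elim: k F => [|k IH] F hF; first by rewrite Q0E => f; rewrite (Q0i hF) mulr0.
rewrite QSE => w; apply: (Q_ext (IH _ (QSi hF w))) => f; by rewrite /dif mulrBr.
Qed.

Lemma Qconst (c : R) : Q 1 (fun _ : V -> int => c).
Proof. rewrite QSE => w; rewrite Q0E => f; by rewrite /dif subrr. Qed.

Lemma QM_aux N : forall a b F G, (a + b = N)%N -> Q a.+1 F -> Q b.+1 G ->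
  Q (a + b).+1 (fun f => F f * G f).
Proof.
elim: N {-2}N (leqnn N) => [|N IH] M hM a b F G hab hF hG.
  have a0 : a = 0%N by lia.
  have b0 : b = 0%N by lia.
  subst a b; rewrite QSE => w; rewrite Q0E => f.
  have := Q0i (QSi hF w) f; have := Q0i (QSi hG w) f.
  by rewrite /dif => /subr0_eq <- /subr0_eq <-; rewrite subrr.
rewrite QSE => w.
have e : forall f, dif w F f * G f + F (fun v => f v - w v) * dif w G f
                 = dif w (fun f => F f * G f) f.
  by move=> f; rewrite /dif mulrBl mulrBr addrA subrK.
apply: (Q_ext _ e); apply: QD.
  case: a hab hF => [|a] hab hF.
    by apply: (Q_ext (@Q0 V R _)) => f; rewrite (Q0i (QSi hF w)) mul0r.
  rewrite addSn; apply: (IH (a + b)%N _ a b _ _ _ (QSi hF w) hG) => //; lia.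
case: b hab hG => [|b] hab hG.
  by apply: (Q_ext (@Q0 V R _)) => f; rewrite (Q0i (QSi hG w)) mulr0.
rewrite addnS; apply: (IH (a + b)%N _ a b _ _ _ (Qsh w hF) (QSi hG w)) => //; lia.
Qed.

Lemma QM a b F G : Q a.+1 F -> Q b.+1 G -> Q (a + b).+1 (fun f => F f * G f).
Proof. exact: (@QM_aux (a + b)). Qed.

End DiffRing.
Section Newton.

Definition d1 (h : int -> rat) : int -> rat := fun x => h x - h (x - 1).
Definition Bn (k : nat) (x : int) : rat :=
  (k`!%:R)^-1 * \prod_(i < k) (x%:~R + i%:R).

Lemma Bn0 x : Bn 0 x = 1.
Proof. by rewrite /Bn big_ord0 fact0 invr1 mulr1. Qed.

Lemma BnS0 k : Bn k.+1 0 = 0.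
Proof. by rewrite /Bn big_ord_recl /= addr0 mul0r mulr0. Qed.

Lemma d1Bn k x : Bn k.+1 x - Bn k.+1 (x - 1) = Bn k x.
Proof.
rewrite /Bn big_ord_recr /= [in X in _ - X]big_ord_recl /=.
set P := \prod_(i < k) (x%:~R + i%:R).
have -> : \prod_(i < k) ((x - 1)%:~R + (lift ord0 i)%:R) = P :> rat.
  apply: eq_bigr => i _; rewrite /= /bump /= add1n -natr1 rmorphB /=; ring.
rewrite factS natrM rmorphB /=.
have h1 : (k`!%:R : rat) != 0 by rewrite pnatr_eq0 -lt0n fact_gt0.
have h2 : (k.+1%:R : rat) != 0 by rewrite pnatr_eq0.
rewrite -natr1 in h2 *.
field; by rewrite h1 h2.
Qed.

Lemma const_int (h : int -> rat) : (forall x, d1 h x = 0) -> forall x, h x = h 0.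
Proof.
move=> H.
have hp : forall k : nat, h k%:Z = h 0.
  elim=> // k IH; rewrite -IH; have := H k.+1; rewrite /d1 => /subr0_eq ->.
  by congr h; rewrite -addn1 PoszD addrK.
have hn : forall k : nat, h (- k%:Z) = h 0.
  elim=> // k IH; rewrite -IH; have := H (- k%:Z); rewrite /d1 => /subr0_eq ->.
  by congr h; rewrite -addn1 PoszD opprD.
by case=> k; [exact: hp | rewrite NegzE; exact: hn].
Qed.

Lemma newton D (h : int -> rat) : (forall x, iter D.+1 d1 h x = 0) ->
  forall x, h x = \sum_(k < D.+1) iter k d1 h 0 * Bn k x.
Proof.
elim: D h => [|D IH] h H.
  move=> x; rewrite big_ord_recl big_ord0 /= Bn0 mulr1 addr0.
  exact: const_int H x.
have IHd : forall x, d1 h x = \sum_(k < D.+1) iter k d1 (d1 h) 0 * Bn k x.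
  by apply: IH => x; rewrite -iterSr.
set N := fun x => \sum_(k < D.+2) iter k d1 h 0 * Bn k x.
have dN : forall x, N x - N (x - 1) = d1 h x.
  move=> x; rewrite /N -sumrB big_ord_recl /= !Bn0 subrr add0r IHd.
  apply: eq_bigr => i _; rewrite -mulrBr d1Bn /=; congr (_ * _).
  by rewrite /bump /= add0n -iterSr.
have hg : forall x, d1 (fun y => h y - N y) x = 0.
  move=> x; have e := dN x; rewrite /d1 in e *.
  transitivity ((h x - h (x - 1)) - (N x - N (x - 1))); first ring.
  by rewrite e subrr.
move=> x; have := const_int hg x.
have -> : h 0 - N 0 = 0.
  rewrite /N big_ord_recl /= Bn0 mulr1 big1 ?addr0 ?subrr // => i _.
  by rewrite /bump /= add1n BnS0 mulr0.
by move/subr0_eq.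
Qed.

End Newton.
Section Bridge.
Variable V : finType.
Local Notation MP := {mpoly rat[#|V|]}.
Implicit Types p q : MP.

Lemma msize_leP p k : (forall m, m \in msupp p -> (mdeg m < k)%N) -> (msize p <= k)%N.
Proof.
rewrite msizeE; elim: (msupp p) => [|m s IH] h; first by rewrite big_nil.
rewrite big_cons geq_max h ?mem_head // IH // => m' hm'; apply: h.
by rewrite inE hm' orbT.
Qed.

Lemma msizeD_le p q k : (msize p <= k)%N -> (msize q <= k)%N -> (msize (p + q) <= k)%N.
Proof.
move=> hp hq; apply: msize_leP => m /msuppD_le; rewrite mem_cat => /orP [] hm.
  exact: leq_trans (msize_mdeg_lt hm) hp.
exact: leq_trans (msize_mdeg_lt hm) hq.
Qed.

Lemma msize_sum_le N (F : 'I_N -> MP) k :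
  (forall i, (msize (F i) <= k)%N) -> (msize (\sum_(i < N) F i) <= k)%N.
Proof.
move=> h; elim/big_ind: _ => //; first by rewrite msize0.
by move=> x y; apply: msizeD_le.
Qed.

Lemma msizeM_le' p q : (msize (p * q) <= (msize p + msize q).-1)%N.
Proof.
have [->|np] := eqVneq p 0; first by rewrite mul0r msize0.
have [->|nq] := eqVneq q 0; first by rewrite mulr0 msize0.
by rewrite msizeM.
Qed.

Lemma msizeC_le (c : rat) : (msize (c%:MP : MP) <= 1)%N.
Proof.
apply: msize_leP => m; rewrite msuppC; case: eqP => // _.
by rewrite inE => /eqP ->; rewrite mdeg0.
Qed.

Lemma msizeXU_le (i : 'I_#|V|) : (msize ('X_i : MP) <= 2)%N.
Proof. by rewrite msizeX mdeg1. Qed.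

Definition ev p (f : V -> int) : rat := eval_at p f.

Lemma Qcoordfun (j : V) : Q 2 (fun f : V -> int => ((f j)%:~R : rat)).
Proof.
rewrite QSE => w; apply: (Q_ext (@Qconst V _ ((w j)%:~R : rat))) => f.
by rewrite /dif rmorphB /= opprB addrC subrK.
Qed.

Lemma Q_sum (T : eqType) (s : seq T) (G : T -> (V -> int) -> rat) k :
  (forall t, t \in s -> Q k (G t)) -> Q k (fun f => \sum_(t <- s) G t f).
Proof.
elim: s => [|t s IH] h.
  by apply: (Q_ext (@Q0 V _ k)) => f; rewrite big_nil.
have ht : Q k (G t) by apply: h; rewrite mem_head.
have hs : Q k (fun f => \sum_(t <- s) G t f).
  by apply: IH => t' ht'; apply: h; rewrite inE ht' orbT.
by apply: (Q_ext (QD ht hs)) => f; rewrite big_cons.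
Qed.

Lemma Q_pow (X : (V -> int) -> rat) e : Q 2 X -> Q e.+1 (fun f => X f ^+ e).
Proof.
move=> hX; elim: e => [|e IH].
  by apply: (Q_ext (@Qconst V _ 1)) => f; rewrite expr0.
by apply: (Q_ext (QM hX IH)) => f; rewrite exprS.
Qed.

Lemma Q_prod N (s : seq 'I_N) (e : 'I_N -> nat) (X : 'I_N -> (V -> int) -> rat) :
  (forall i, Q 2 (X i)) ->
  Q (\sum_(i <- s) e i).+1 (fun f => \prod_(i <- s) X i f ^+ e i).
Proof.
move=> hX; elim: s => [|i s IH].
  by rewrite big_nil; apply: (Q_ext (@Qconst V _ 1)) => f; rewrite big_nil.
rewrite big_cons; apply: (Q_ext (QM (Q_pow (e i) (hX i)) IH)) => f.
by rewrite big_cons.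
Qed.

Lemma QB p D : (msize p <= D)%N -> Q D (ev p).
Proof.
move=> hp.
have e : forall f, \sum_(m <- msupp p) (p@_m * \prod_i ((f (enum_val i))%:~R) ^+ m i)
                   = ev p f.
  by move=> f; rewrite /ev /eval_at mevalE.
apply: (Q_ext _ e).
apply: Q_sum => m hm.
apply: QZ; apply: (Qle _ (@Q_prod _ (index_enum _) m (fun i f => ((f (enum_val i))%:~R : rat))
                     (fun i => Qcoordfun (enum_val i)))).
by rewrite -mdegE; apply: leq_trans hp; apply: msize_mdeg_lt.
Qed.

End Bridge.
Section Bridge2.
Variable V : finType.
Local Notation MP := {mpoly rat[#|V|]}.

Lemma Q_iter (R : zmodType) j k (F : (V -> int) -> R) w :
  Q (j + k) F -> Q j (iter k (dif w) F).
Proof.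
elim: k j => [|k IH] j; first by rewrite addn0.
by rewrite -addSnnS => h; apply: (QSi (IH _ h)).
Qed.

Definition depends_on (R : Type) (l : seq V) (F : (V -> int) -> R) :=
  forall f g, {in l, f =1 g} -> F f = F g.

Lemma dep_iter (R : zmodType) l k (F : (V -> int) -> R) w :
  depends_on l F -> depends_on l (iter k (dif w) F).
Proof.
move=> h; elim: k => [//|k IH] f g fg /=; rewrite /dif (IH f g fg); congr (_ - _).
by apply: IH => v vl; rewrite fg.
Qed.

Lemma iter_d1 (F : (V -> int) -> rat) a f k x :
  iter k d1 (fun y => F (fun v => if v == a then y else f v)) x =
  iter k (dif (courant a)) F (fun v => if v == a then x else f v).
Proof.
elim: k x => [//|k IH] x /=; rewrite /d1 /dif !IH; congr (_ - iter _ _ F _).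
apply: functional_extensionality => v; rewrite /courant; case: (v == a) => //=.
by rewrite subr0.
Qed.

Lemma msize_prodX N (Y : 'I_N -> MP) :
  (forall i, msize (Y i) <= 2)%N -> (msize (\prod_(i < N) Y i) <= N.+1)%N.
Proof.
elim: N Y => [|N IH] Y h; first by rewrite big_ord0 msize1.
rewrite big_ord_recr /=; apply: leq_trans (msizeM_le' _ _) _.
have := IH (fun i => Y (widen_ord (leqnSn N) i)) (fun i => h _).
have := h ord_max.
move: (msize (\prod_(i < N) _)) (msize (Y ord_max)) => x y; lia.
Qed.

Lemma QA (l : seq V) : forall D (F : (V -> int) -> rat), Q D.+1 F -> depends_on l F ->
  exists p : MP, (msize p <= D.+1)%N /\ forall f, F f = ev p f.
Proof.
elim: l => [|a l IH] D F HQ Hdep.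
  exists ((F (fun _ => 0))%:MP); split; first exact: leq_trans (msizeC_le V _) _.
  by move=> f; rewrite /ev /eval_at mevalC; apply: Hdep.
set G := fun (k : 'I_D.+1) f => iter k (dif (courant a)) F (fun v => if v == a then 0 else f v).
have hG : forall k : 'I_D.+1, exists p : MP, (msize p <= (D - k).+1)%N /\ forall f, G k f = ev p f.
  move=> k; apply: IH.
    apply: (Qcomp (L := fun f v => if v == a then 0 else f v)).
      move=> f w; apply: functional_extensionality => v; by case: (v == a); rewrite ?subr0.
    apply: Q_iter; have -> : ((D - k).+1 + k = D.+1)%N by have := ltn_ord k; lia.
    exact: HQ.
  move=> f g fg; rewrite /G; apply: (dep_iter _ _ Hdep) => v; rewrite inE.
  by case: (v == a) => //= /fg.
have [P HP] := fin_all_exists hG.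
set b := fun k : nat => (k`!%:R : rat)^-1 *: \prod_(i < k) ('X_(enum_rank a) + (i%:R : rat)%:MP : MP).
exists (\sum_(k < D.+1) P k * b k); split.
  apply: msize_sum_le => k; apply: leq_trans (msizeM_le' _ _) _.
  have h1 := (HP k).1.
  have h2 : (msize (b k) <= k.+1)%N.
    apply: leq_trans (msizeZ_le _ _) _; apply: msize_prodX => i.
    apply: msizeD_le; first exact: msizeXU_le.
    exact: leq_trans (msizeC_le V _) _.
  have := ltn_ord k; move: h1 h2; move: (msize (P k)) (msize (b k)) => x y; lia.
move=> f.
set h := fun y => F (fun v => if v == a then y else f v).
have -> : F f = h (f a).
  rewrite /h; congr F; apply: functional_extensionality => v.
  by case: eqP => [->|].
rewrite (@newton D h); last first.
  by move=> x; rewrite iter_d1; apply: Qiter.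
rewrite /ev /eval_at (big_morph _ (mevalD _) (meval0 _)); apply: eq_bigr => k _.
rewrite mevalM -/(eval_at _ _) -/(ev _ _) -(HP k).2 iter_d1.
congr (_ * _).
rewrite /b mevalZ (big_morph _ (mevalM _) (meval1 _)) /Bn; congr (_ * _); apply: eq_bigr => i _.
by rewrite mevalD mevalXU mevalC enum_rankK.
Qed.

End Bridge2.
Section Fan.
Variables (n : nat) (V : finType) (u : V -> 'rV[int]_n) (C : {set {set V}}).
Hypothesis hU : unimodular_fan u C.

Lemma pairing0 x : pairing (0 : 'rV[int]_n) x = 0.
Proof. by rewrite /pairing big1 // => i _; rewrite mxE mul0r. Qed.

Lemma pairingZ (c : int) (m x : 'rV[int]_n) : pairing (c *: m) x = c * pairing m x.
Proof.
rewrite /pairing mulr_sumr; apply: eq_bigr => i _; by rewrite mxE mulrA.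
Qed.

Lemma wd_link s chi f g : well_defined u C s chi ->
  (forall v, v \in link C s -> f v = g v) -> chi f = chi g.
Proof.
move=> wd h; apply: wd; exists 0; split; first by move=> v _; rewrite pairing0.
by move=> v hv; rewrite pairing0 h // subrr.
Qed.

Lemma is_chiF_wd d s chi : is_chiF u C d s chi -> well_defined u C s chi.
Proof. by case: d => [|d] []. Qed.

Lemma m0_exists r s : r \in link C s -> exists m0 : 'rV[int]_n,
  (forall v, v \in s -> pairing m0 (u v) = 0) /\ pairing m0 (u r) = 1.
Proof.
rewrite inE => /andP [rs rsC].
have [_ _ _ _ h5] := hU.
have [B [uB [e [einj erow]]]] := h5 _ rsC.
set y : 'cV[int]_n := delta_mx (e r) 0.
set z := invmx B *m y.
have Bz : B *m z = y by rewrite /z mulmxA mulmxV // mul1mx.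
have key : forall v, v \in r |: s -> pairing z^T (u v) = y (e v) 0.
  move=> v hv; rewrite -Bz -(erow v hv) /pairing mxE; apply: eq_bigr => i _.
  by rewrite !mxE mulrC.
have rin : r \in r |: s by rewrite setU11.
exists z^T; split; last by rewrite key // /y mxE !eqxx.
move=> v vs; have vin : v \in r |: s by rewrite setU1r.
rewrite key // /y mxE andbT; case: eqP => // /einj.
by move=> /(_ vin rin) evr; move: rs; rewrite -evr vs.
Qed.

Definition Mx (t : {set V}) : nat := \max_(S in C | t \subset S) #|S|.
Definition dimS (t : {set V}) : nat := (Mx t - #|t|)%N.

Lemma Mx_ge (t : {set V}) : t \in C -> (#|t| <= Mx t)%N.
Proof. by move=> tC; rewrite /Mx; apply: leq_bigmax_cond; rewrite tC subxx. Qed.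

Lemma Mx_le (t S : {set V}) : S \in C -> t \subset S -> (#|S| <= Mx t)%N.
Proof. by move=> SC tS; rewrite /Mx; apply: leq_bigmax_cond; rewrite SC tS. Qed.

Lemma Mx_mono a s : (Mx (a |: s) <= Mx s)%N.
Proof.
apply/bigmax_leqP => S /andP [SC hS]; apply: Mx_le => //.
exact: subset_trans (subsetUr _ _) hS.
Qed.

Lemma link_C a s : a \in link C s -> (a |: s \in C) /\ a \notin s.
Proof. by rewrite inE => /andP [-> ->]. Qed.

Lemma card_link a s : a \in link C s -> #|a |: s| = #|s|.+1.
Proof. by move=> /link_C [_ ns]; rewrite cardsU1 ns. Qed.

Lemma dimS_link a s : a \in link C s -> ((dimS (a |: s)).+1 <= dimS s)%N.
Proof.
move=> h; rewrite /dimS card_link //.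
have := Mx_mono a s; have := Mx_ge (link_C h).1; rewrite card_link //.
move: (Mx (a |: s)) (Mx s) => x y; lia.
Qed.

Lemma dif_rec d s chi a psi m0 : is_chiF u C d.+1 s chi -> a \in link C s ->
  is_chiF u C d (a |: s) psi ->
  (forall v, v \in s -> pairing m0 (u v) = 0) -> pairing m0 (u a) = 1 ->
  forall f, chi f = chi (fun v => f v - courant a v)
                    + psi (fun v => f v - f a * pairing m0 (u v)).
Proof.
move=> [_ _ H] ha hpsi hs ha1 f.
rewrite ((H a ha).2 psi hpsi f (f a *: m0)); last by rewrite pairingZ ha1 mulr1.
  by congr (_ + psi _); apply: functional_extensionality => v; rewrite pairingZ.
by move=> v vs; rewrite pairingZ hs // mulr0.
Qed.

Lemma L_additive a (p : V -> int) : forall f w : V -> int,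
  (fun v => (f v - w v) - (f a - w a) * p v) =
  (fun v => (f v - f a * p v) - (w v - w a * p v)).
Proof. by move=> f w; apply: functional_extensionality => v; ring. Qed.

Lemma UB d : forall s chi, is_chiF u C d s chi -> Q (dimS s).+1 chi.
Proof.
elim: d => [|d IH] s chi hchi.
  have [wd c1 hl] := hchi.
  apply: (Qle _ (F := chi) (k := 1)) => //; rewrite QSE => w; rewrite Q0E => f.
  rewrite /dif (wd_link (f := f) (g := fun v => f v - w v) wd) ?subrr //.
  by move=> v; rewrite hl inE.
have [wd c1 H] := hchi.
apply: Qcoord => a.
case: (boolP (a \in link C s)) => ha; last first.
  apply: (Q_ext (@Q0 V int _)) => f; rewrite /dif.
  rewrite (wd_link (f := f) (g := fun v => f v - courant a v) wd) ?subrr //.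
  move=> v hv; rewrite /courant; case: eqP => [va|]; last by rewrite subr0.
  by move: ha; rewrite -va hv.
have [[psi hpsi] _] := H a ha.
have [m0 [hs ha1]] := m0_exists ha.
have Qpsi := IH _ _ hpsi.
have := Qcomp (L := fun f v => f v - f a * pairing m0 (u v)) (L_additive a _) Qpsi.
move=> /(Qle (dimS_link ha)) Q1.
apply: (Q_ext Q1) => f; rewrite /dif (dif_rec hchi ha hpsi hs ha1 f).
by rewrite addrC addKr.
Qed.

Lemma LB d : forall s chi, is_chiF u C d s chi -> ~ Q (dimS s) chi.
Proof.
elim: d => [|d IH] s chi hchi.
all: have [wd c1 H] := hchi.
all: case hd: (dimS s) => [|k]; first by rewrite Q0E => /(_ (fun _ => 0)); rewrite c1.
all: case: (boolP [exists S, [&& S \in C, s \subset S & (Mx s <= #|S|)%N]]); last first.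
1,3: move=> /existsPn hn; exfalso.
1,2: have : (Mx s <= (Mx s).-1)%N.
1,3: by apply/bigmax_leqP => S /andP [SC sS]; have := hn S; rewrite SC sS /=;
       move: (Mx s) (#|S|) => x y; lia.
1,2: by move: hd; rewrite /dimS; move: (Mx s) => x; lia.
all: move=> /existsP [S /and3P [SC sS hS]].
all: have hS2 := Mx_le SC sS.
all: have : ~~ (S \subset s).
1,3: apply/negP => /subset_leq_card; move: hd hS hS2; rewrite /dimS.
1,2: by move: (Mx s) (#|S|) (#|s|) => x y z; lia.
all: move=> /subsetPn [a aS ans].
all: have ha : a \in link C s.
1,3: rewrite inE ans /=; have [_ _ h3 _ _] := hU; apply: h3 SC _.
1,2: by rewrite subUset sub1set aS sS.
  by move: ha; rewrite H inE.
have [[psi hpsi] _] := H a ha.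
have [m0 [hs ha1]] := m0_exists ha.
have hd' : dimS (a |: s) = k.
  have e1 : Mx (a |: s) = #|S|.
    apply/eqP; rewrite eqn_leq; apply/andP; split.
      exact: leq_trans (Mx_mono a s) hS.
    by apply: Mx_le => //; rewrite subUset sub1set aS sS.
  move: hd; rewrite /dimS e1 card_link //.
  move: hS hS2; move: (Mx s) (#|S|) (#|s|) => x y z; lia.
have := IH _ _ hpsi; rewrite hd' => nQ Qchi; apply: nQ.
have Q1 : Q k (fun f => psi (fun v => f v - f a * pairing m0 (u v))).
  apply: (Q_ext (QSi Qchi (courant a))) => f.
  by rewrite /dif (dif_rec hchi ha hpsi hs ha1 f) addrC addKr.
have := Qcomp (L := fun f v => if v == a then 0 else f v) _ Q1.
have hP : forall f w : V -> int, (fun v => if v == a then 0 else f v - w v) =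
     (fun v => (if v == a then 0 else f v) - (if v == a then 0 else w v)).
  by move=> f w; apply: functional_extensionality => v; case: (v == a); rewrite ?subr0.
move=> /(_ hP) Q2; apply: (Q_ext Q2) => f /=; rewrite [a == a]eqxx /=.
have wd' := is_chiF_wd hpsi.
apply: wd_link wd' _ => v; rewrite inE => /andP [hv _].
case: eqP => [va|_]; first by move: hv; rewrite va setU11.
lia.
Qed.

Lemma uniq_chi d : forall s chi1 chi2, is_chiF u C d s chi1 -> is_chiF u C d s chi2 ->
  forall f, chi1 f = chi2 f.
Proof.
case: d => [|d] s chi1 chi2 h1 h2 f.
  have [wd1 c1 l1] := h1; have [wd2 c2 _] := h2.
  have e1 : chi1 f = chi1 (fun _ => 0) by apply: wd_link wd1 _ => v; rewrite l1 inE.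
  have e2 : chi2 f = chi2 (fun _ => 0) by apply: wd_link wd2 _ => v; rewrite l1 inE.
  by rewrite e1 e2 c1 c2.
have [wd1 c1 H1] := h1; have [wd2 c2 H2] := h2.
apply/eqP; rewrite -subr_eq0; apply/eqP.
pattern f; apply: (@lattice_ind V _ (enum (link C s))).
  move=> g a; rewrite mem_enum => ha hg.
  have [[psi hpsi] _] := H1 a ha.
  have [m0 [hs ha1]] := m0_exists ha.
  have key : forall f, chi1 f - chi2 f = chi1 (fun v => f v - courant a v)
                                        - chi2 (fun v => f v - courant a v).
    move=> f'; rewrite (dif_rec h1 ha hpsi hs ha1 f') (dif_rec h2 ha hpsi hs ha1 f').
    by rewrite opprD addrACA subrr addr0.
  split; last by rewrite -key.
  rewrite key; move: hg; congr (_ = 0); congr (chi1 _ - chi2 _);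
    by apply: functional_extensionality => v; rewrite addrK.
set g0 := fun v => if v \in enum (link C s) then 0 else f v.
have e1 : chi1 g0 = chi1 (fun _ => 0) by apply: wd_link wd1 _ => v hv; rewrite /g0 mem_enum hv.
have e2 : chi2 g0 = chi2 (fun _ => 0) by apply: wd_link wd2 _ => v hv; rewrite /g0 mem_enum hv.
by rewrite e1 e2 c1 c2 subrr.
Qed.

Lemma Q_intr k (F : (V -> int) -> int) :
  Q k F <-> Q k (fun f => ((F f)%:~R : rat)).
Proof.
elim: k F => [|k IH] F.
  rewrite !Q0E; split=> h f; first by rewrite h.
  by apply/eqP; rewrite -(intr_eq0 rat) h.
rewrite !QSE; split=> h w.
  by apply: (Q_ext ((IH _).1 (h w))) => f; rewrite /dif rmorphB.
apply/IH; apply: (Q_ext (h w)) => f; by rewrite /dif rmorphB.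
Qed.

End Fan.
Theorem proposition3 (n : nat) (V : finType) (u : V -> 'rV[int]_n)
  (C : {set {set V}}) :
  unimodular_fan u C -> ehrhart u C ->
  exists chi : (V -> int) -> int,
    [/\ is_chi u C set0 chi,
        forall chi' : (V -> int) -> int, is_chi u C set0 chi' ->
          forall f : V -> int, chi' f = chi f &
        exists p : {mpoly rat[#|V|]},
          msize p = (fan_dim C).+1 /\
          forall f : V -> int, (chi f)%:~R = eval_at p f].
Proof.
move=> hU [chi hchi]; exists chi; split => //.
  by move=> chi' h' f; apply: (uniq_chi hU h' hchi).
have hdim : dimS C set0 = fan_dim C.
  rewrite /dimS /Mx cards0 subn0 /fan_dim; apply: eq_bigl => S.
  by rewrite sub0set andbT.
have Qup := UB hU hchi; rewrite hdim in Qup.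
have Qlow := LB hU hchi; rewrite hdim in Qlow.
have dep : depends_on (enum V) (fun f => ((chi f)%:~R : rat)).
  move=> f g fg; congr (_%:~R); congr chi; apply: functional_extensionality => v.
  by apply: fg; rewrite mem_enum.
have [p [hp ep]] := QA ((Q_intr _ chi).1 Qup) dep.
exists p; split => //.
apply/eqP; rewrite eqn_leq hp /= ltnNge; apply/negP => hle.
apply: Qlow; apply/(Q_intr _ chi).2; apply: (Q_ext (QB hle)) => f.
by rewrite ep.
Qed.
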